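(* Let $s\ge 2$ be an integer and let $A\in\mathbb{R}^{s\times s}$ be the strictly lower triangular matrix with $a_{ij}=\frac{1}{s-1}$ for all $1\le j<i\le s$ and $a_{ij}=0$ otherwise (this is the coefficient matrix of the optimal second-order method SSPERK$(s,2)$, whose weights are $b=\frac{1}{s}\mathbf e$). Consider the two weight vectors $$\tilde b_1=\Big[\tfrac{1}{s-1},\ldots,\tfrac{1}{s-1},0\Big],\qquad \tilde b_2=\Big[\tfrac{s+1}{s^2},\tfrac1s,\ldots,\tfrac1s,\tfrac{s-1}{s^2}\Big]$$ (in $\tilde b_1$ the first $s-1$ entries equal $\frac1{s-1}$; in $\tilde b_2$ the entries $2,\dots,s-1$ equal $\frac1s$). Then for $k=1,2$ the explicit Runge--Kutta method $(A,\tilde b_k)$ is of order one (i.e. $\tilde b_k^T\mathbf e=1$), it is non-defective in the sense that $\tilde b_k^Tc\neq\frac12$ where $c=A\mathbf e$, and its SSP coefficient equals $s-1$ (the SSP coefficient of SSPERK$(s,2)$).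
   Context: An explicit $s$-stage Runge--Kutta method with strictly lower triangular coefficient matrix $A$ and weight vector $b$ is denoted $(A,b)$; $\mathbf e=(1,\dots,1)^T$ and $c=A\mathbf e$. SSP coefficient: with $K=\begin{pmatrix}A&0\\ b^T&0\end{pmatrix}\in\mathbb{R}^{(s+1)\times(s+1)}$, the SSP coefficient of $(A,b)$ is $\mathcal C(A,b)=\sup\{r\ge 0:\ (I+rK)^{-1}\text{ exists},\ K(I+rK)^{-1}\ge 0,\ rK(I+rK)^{-1}\mathbf e\le \mathbf e\}$, inequalities taken componentwise. *)

(* Defs.v *)
From HB Require Import structures.
From mathcomp Require Import all_boot all_order all_algebra.
Set Implicit Arguments. Unset Strict Implicit. Unset Printing Implicit Defensive.
Import Order.TTheory GRing.Theory Num.Theory.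
Local Open Scope ring_scope.

Definition sspK (R : realFieldType) (s : nat) (A : 'M[R]_s) (b : 'cV[R]_s)
  : 'M[R]_(s + 1) := block_mx A 0 b^T 0.

Definition ssp_feasible (R : realFieldType) (s : nat) (A : 'M[R]_s) (b : 'cV[R]_s)
  (r : R) : Prop :=
  let K := sspK A b in
  let M := 1%:M + r *: K in
  [/\ 0 <= r,
      M \in unitmx,
      (forall i j, 0 <= (K *m invmx M) i j) &
      (forall i, ((r *: K) *m invmx M *m (const_mx 1 : 'cV[R]_(s + 1))) i 0 <= 1)].

Definition is_ssp_coef (R : realFieldType) (s : nat) (A : 'M[R]_s) (b : 'cV[R]_s)
  (C : R) : Prop :=
  (forall r, ssp_feasible A b r -> r <= C) /\
  (forall u, (forall r, ssp_feasible A b r -> r <= u) -> C <= u).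

Definition A_ssp2 (R : realFieldType) (s : nat) : 'M[R]_s :=
  \matrix_(i, j) (if (j < i)%N then (s.-1)%:R^-1 else 0).

Definition b1_tilde (R : realFieldType) (s : nat) : 'cV[R]_s :=
  \col_i (if (i < s.-1)%N then (s.-1)%:R^-1 else 0).

Definition b2_tilde (R : realFieldType) (s : nat) : 'cV[R]_s :=
  \col_i (if (i : nat) == 0%N then (s.+1)%:R / (s ^ 2)%:R
          else if (i : nat) == s.-1 then (s.-1)%:R / (s ^ 2)%:R
          else (s%:R)^-1).

(* Main.v *)
Require Import Defs.
From HB Require Import structures.
From mathcomp Require Import all_boot all_order all_algebra.
From mathcomp Require Import ring lra zify.
Set Implicit Arguments. Unset Strict Implicit. Unset Printing Implicit Defensive.
Import Order.TTheory GRing.Theory Num.Theory.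
Local Open Scope ring_scope.

Definition Kf (R : realFieldType) (s : nat) (f : nat -> R) (i j : nat) : R :=
  if (j < i)%N then (if (i < s)%N then (s.-1)%:R^-1 else f j) else 0.

Lemma sspK_E (R : realFieldType) s (f : nat -> R) (i j : 'I_(s+1)) :
  sspK (A_ssp2 R s) (\col_k f k) i j = Kf s f i j.
Proof.
rewrite /sspK /block_mx /col_mx /row_mx /Kf !mxE.
case: (splitP i) => i' Hi; rewrite !mxE; case: (splitP j) => j' Hj; rewrite !mxE /= ?Hi ?Hj //.
- have := ltn_ord i'; case: ifP => //; lia.
- have := ltn_ord j'; have := ltn_ord i'; case: ifP => //; lia.
- have := ltn_ord j'; have := ltn_ord i'; case: ifP => //; lia.
Qed.

Lemma M_E (R : realFieldType) s (f : nat -> R) (r : R) (i j : 'I_(s+1)) :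
  (1%:M + r *: sspK (A_ssp2 R s) (\col_k f k)) i j
  = ((i : nat) == j)%:R + r * Kf s f i j.
Proof. rewrite mxE; congr (_ + _); first by rewrite mxE. by rewrite mxE sspK_E. Qed.

Lemma sum_delta (R : ringType) n (i : nat) (G : nat -> R) : (i < n)%N ->
  \sum_(k < n) ((i == k)%:R * G k) = G i.
Proof.
move=> hi; rewrite (bigD1 (Ordinal hi)) //= eqxx mul1r big1 ?addr0 // => k hk.
rewrite (_ : (i == k) = false) ?mul0r //; apply/negbTE; move: hk; apply: contra.
by move=> /eqP e; apply/eqP/val_inj.
Qed.

Lemma sum_deltaO (R : ringType) n (i : 'I_n) (G : 'I_n -> R) :
  \sum_(k < n) (((i : nat) == k)%:R * G k) = G i.
Proof.
rewrite (bigD1 i) //= eqxx mul1r big1 ?addr0 // => k hk.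
by rewrite (_ : ((i:nat) == k) = false) ?mul0r //; apply/negbTE; rewrite eq_sym.
Qed.

Lemma sum_delta1 (R : ringType) n (i : nat) (G : nat -> R) : (i <= n)%N ->
  \sum_(k < n) ((i == k.+1)%:R * G k) = if i is i'.+1 then G i' else 0.
Proof.
case: i => [|i] hi.
  by rewrite big1 // => k _; rewrite mul0r.
by under eq_bigr => k _ do rewrite eqSS; rewrite sum_delta.
Qed.

Lemma Kf_lt (R : realFieldType) s (f : nat -> R) k j : (1 < s)%N -> (k < s)%N ->
  (s.-1)%:R * Kf s f k j = (j < k)%:R.
Proof.
move=> hs hk; rewrite /Kf hk; case: ifP => _; last by rewrite mulr0.
rewrite mulfV // pnatr_eq0; lia.
Qed.

Lemma ssp_upper (R : realFieldType) s (f : nat -> R) r : (2 <= s)%N ->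
  ssp_feasible (A_ssp2 R s) (\col_k f k) r -> r <= (s.-1)%:R.
Proof.
move=> hs [r0 Mu Kpos Hsum].
set K := sspK _ _ in Kpos Hsum Mu *.
set M := 1%:M + r *: K in Mu Kpos Hsum *.
set X := invmx M in Kpos Hsum *.
have MX : M *m X = 1%:M by apply: mulmxV.
have rKX : (r *: K) *m X = 1%:M - X.
  by rewrite -MX /M mulmxDl mul1mx addrC addKr.
set e := (const_mx 1 : 'cV[R]_(s+1)) in Hsum *.
set v := X *m e.
have Mv : M *m v = e by rewrite /v mulmxA MX mul1mx.
have h1 : (1 < s + 1)%N by lia.
have h0 : (0 < s + 1)%N by lia.
have := Hsum (Ordinal h1); rewrite rKX mulmxBl mul1mx mxE [e _ _]mxE.
rewrite -/v mxE => hv.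
have E0 := congr1 (fun m : 'cV[R]_(s+1) => m (Ordinal h0) 0) Mv.
have E1 := congr1 (fun m : 'cV[R]_(s+1) => m (Ordinal h1) 0) Mv.
move: E0 => /=; rewrite !mxE.
under eq_bigr => k _ do rewrite /M M_E /Kf ltn0 mulr0 addr0.
rewrite (sum_deltaO (Ordinal h0) (fun k => v k 0)) => v0.
move: E1 => /=; rewrite !mxE.
under eq_bigr => k _ do rewrite /M M_E.
under eq_bigr => k _ do rewrite mulrDl.
rewrite big_split /= (sum_deltaO (Ordinal h1) (fun k => v k 0)).
have EQ : forall k : 'I_(s+1), r * Kf s f 1 k * v k 0 = (((Ordinal h0) : nat) == (k : nat))%:R * (r * (s.-1)%:R^-1 * v (Ordinal h0) 0).
  move=> k; rewrite /Kf; case: k => [[|k] hk] /=; last by rewrite mulr0 !mul0r.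
  have -> : (1 < s)%N by lia.
  rewrite mul1r.
  by rewrite (_ : Ordinal hk = Ordinal h0) //; apply: val_inj.
under eq_bigr => k _ do rewrite EQ.
rewrite (sum_deltaO (Ordinal h0) (fun k => _)) v0 mulr1 => E1.
have hv1 : 0 <= v (Ordinal h1) 0 by lra.
have sp : 0 < (s.-1)%:R :> R by rewrite ltr0n; lia.
have : r * (s.-1)%:R^-1 <= 1 by lra.
by rewrite ler_pdivrMr // mul1r.
Qed.
Definition bbf (R : realFieldType) s (f : nat -> R) j := if (j < s)%N then f j else 0.
Definition xf (R : realFieldType) s (f : nat -> R) (i j : nat) : R :=
  if (i < s)%N then (i == j)%:R - (i == j.+1)%:R
  else if (j < s)%N then - (s.-1)%:R * (f j - bbf s f j.+1) else 1.

Lemma eq_lt_le (R : ringType) (j k : nat) : (k == j)%:R + (j < k)%:R = (j <= k)%:R :> R.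
Proof.
by case: (ltngtP j k) => _ /=; rewrite ?add0r ?addr0.
Qed.

Lemma X0M (R : realFieldType) s (f : nat -> R) : (2 <= s)%N ->
  (\matrix_(i, j) xf s f i j : 'M_(s+1)) *m (1%:M + (s.-1)%:R *: sspK (A_ssp2 R s) (\col_k f k))
  = 1%:M.
Proof.
move=> hs; set r0 := (s.-1)%:R.
apply/matrixP => i j; rewrite !mxE.
under eq_bigr => k _ do rewrite mxE M_E.
rewrite -val_eqE /=.
have [hi|hi] := ltnP i s.
  under eq_bigr => k _ do rewrite /xf hi mulrBl.
  rewrite sumrB (sum_delta (fun k => (k == j)%:R + r0 * Kf s f k j)); last by lia.
  rewrite (sum_delta1 (fun k => (k == j)%:R + r0 * Kf s f k j)); last by lia.
  case ei: (i : nat) hi => [|i'] hi.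
    by rewrite /Kf ltn0 mulr0 !addr0 subr0.
  rewrite !Kf_lt //; last by lia.
  rewrite ltnS -(eq_lt_le R j i'); lra.
have ei : (i : nat) = s by have := ltn_ord i; lia.
rewrite ei; move: (ltn_ord j); move: (nat_of_ord j) => {}j hj1.
rewrite -(big_mkord xpredT (fun k => xf s f s k * ((k == j)%:R + r0 * Kf s f k j))).
rewrite addn1 big_nat_recr //= {2}/xf ltnn.
rewrite (eq_big_nat _ _ (F2 := fun k => (- r0 * (f k - bbf s f k.+1)) * (j <= k)%:R)); last first.
  move=> k /andP[_ hk]; rewrite /xf ltnn hk Kf_lt // eq_lt_le //.
have hK : r0 * Kf s f s j = if (j < s)%N then r0 * f j else 0.
  by rewrite /Kf ltnn; case: ifP => _ //; rewrite mulr0.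
rewrite hK mul1r.
have [hj|hj] := ltnP j s.
  rewrite (big_cat_nat (leq0n j) (ltnW hj)) /=.
  rewrite big_nat_cond big1 ?add0r; last first.
    move=> k /andP[/andP[_ hk] _]; have -> : (j <= k)%N = false by lia. by rewrite mulr0.
  rewrite (telescope_sumr_eq (fun k => r0 * bbf s f k)); last 2 first.
  - exact: ltnW.
  - move=> k /andP[hjk hk]; rewrite hjk mulr1 /bbf hk; lra.
  have -> : (s == j) = false by lia.
  rewrite /bbf ltnn hj /=; lra.
have ej : j = s by lia.
rewrite ej eqxx big_nat_cond big1 ?add0r ?addr0 //.
move=> k /andP[/andP[_ hk] _]; have -> : (s <= k)%N = false by lia. by rewrite mulr0.
Qed.

Lemma sum_delta_1 (R : ringType) n (i : nat) : (i < n)%N ->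
  \sum_(k < n) ((i == k)%:R : R) = 1.
Proof.
move=> hi; have := sum_delta (fun _ => 1 : R) hi.
by under eq_bigr => k _ do rewrite mulr1.
Qed.

Lemma sum_delta1_1 (R : ringType) n (i : nat) : (i <= n)%N ->
  \sum_(k < n) ((i == k.+1)%:R : R) = if i is i'.+1 then 1 else 0.
Proof.
move=> hi; have := sum_delta1 (fun _ => 1 : R) hi.
by under eq_bigr => k _ do rewrite mulr1; case: i {hi}.
Qed.

Lemma rowsum_xf (R : realFieldType) s (f : nat -> R) (i : 'I_(s+1)) : (2 <= s)%N ->
  (s.-1)%:R * f 0 <= 1 -> 0 <= \sum_(k < s+1) xf s f i k.
Proof.
move=> hs h0.
have [hi|hi] := ltnP i s.
  under eq_bigr => k _ do rewrite /xf hi.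
  rewrite sumrB sum_delta_1 ?sum_delta1_1; try lia.
  by case: (nat_of_ord i) => [|?]; rewrite ?subr0 ?subrr ?ler01.
have ei : (i : nat) = s by have := ltn_ord i; lia.
rewrite ei -(big_mkord xpredT (fun k => xf s f s k)) addn1 big_nat_recr //= {2}/xf ltnn.
rewrite (eq_big_nat _ _ (F2 := fun k => - (s.-1)%:R * (f k - bbf s f k.+1))); last first.
  by move=> k /andP[_ hk]; rewrite /xf ltnn hk.
rewrite (telescope_sumr_eq (fun k => (s.-1)%:R * bbf s f k)) //; last first.
  move=> k /andP[_ hk]; rewrite /bbf hk; lra.
rewrite /bbf ltnn (_ : (0 < s)%N) //; last by lia.
lra.
Qed.

Lemma ssp_feas (R : realFieldType) s (f : nat -> R) : (2 <= s)%N ->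
  (forall j, (j < s)%N -> bbf s f j.+1 <= f j) -> (s.-1)%:R * f 0 <= 1 ->
  ssp_feasible (A_ssp2 R s) (\col_k f k) (s.-1)%:R.
Proof.
move=> hs hmono h0; rewrite /ssp_feasible /=.
set r0 := (s.-1)%:R.
set K := sspK (A_ssp2 R s) (\col_k f k).
set X0 := (\matrix_(i, j) xf s f i j : 'M_(s+1)).
have XM : X0 *m (1%:M + r0 *: K) = 1%:M by apply: X0M.
set M := 1%:M + r0 *: K in XM *.
have [_ Mu] := mulmx1_unit XM.
have MX := mulmx1C XM.
have inv : invmx M = X0.
  by rewrite -[invmx _]mul1mx -XM -mulmxA mulmxV // mulmx1.
have r0p : 0 < r0 by rewrite ltr0n; lia.
have rKX : (r0 *: K) *m X0 = 1%:M - X0.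
  by rewrite -MX /M mulmxDl mul1mx addrC addKr.
have KX : K *m X0 = r0^-1 *: (1%:M - X0).
  by rewrite -rKX -scalemxAl scalerA mulVf ?scale1r // lt0r_neq0.
split.
- exact: ltW.
- exact: Mu.
- move=> i j; rewrite inv KX !mxE; apply: mulr_ge0; first by rewrite invr_ge0 ltW.
  rewrite /xf; case: ifP => hi.
    have := ler0n R ((i : nat) == (j : nat).+1); lra.
  have ei : (i : nat) = s by have := ltn_ord i; lia.
  case: ifP => hj.
    have -> : (i == j) = false by apply/negbTE; rewrite -val_eqE /= ei; lia.
    have h : 0 <= f j - bbf s f j.+1 by rewrite subr_ge0; exact: hmono.
    have := mulr_ge0 (ltW r0p) h; rewrite /r0 mulNr (_ : false%:R = 0 :> R) // sub0r opprK; exact.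
  have -> : (i == j) by rewrite -val_eqE /= ei; have := ltn_ord j; lia.
  by rewrite subrr.
- move=> i; rewrite inv rKX mulmxBl mul1mx !mxE.
  under eq_bigr => k _ do rewrite !mxE mulr1.
  have := rowsum_xf i hs h0; lra.
Qed.

Lemma ssp_gen (R : realFieldType) s (f : nat -> R) : (2 <= s)%N ->
  (forall j, (j < s)%N -> bbf s f j.+1 <= f j) -> (s.-1)%:R * f 0 <= 1 ->
  is_ssp_coef (A_ssp2 R s) (\col_k f k) (s.-1)%:R.
Proof.
move=> hs hm h0; split; first by move=> r; apply: ssp_upper.
by move=> u hu; apply: hu; apply: ssp_feas.
Qed.

Lemma c_E (R : realFieldType) s (i : 'I_s) :
  (A_ssp2 R s *m (const_mx 1 : 'cV[R]_s)) i 0 = (i : nat)%:R * (s.-1)%:R^-1.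
Proof.
rewrite mxE; under eq_bigr => j _ do rewrite !mxE mulr1.
rewrite -(big_mkord xpredT (fun j => if (j < i)%N then (s.-1)%:R^-1 else 0)).
rewrite (big_cat_nat (leq0n i) (ltnW (ltn_ord i))) /=.
rewrite (eq_big_nat _ _ (F2 := fun _ => (s.-1)%:R^-1)); last first.
  by move=> k /andP[_ hk]; rewrite hk.
rewrite sumr_const_nat subn0 mulr_natl.
rewrite big_nat_cond big1 ?addr0 //.
by move=> k /andP[/andP[hk _] _]; rewrite ltnNge hk.
Qed.

Lemma sum_id (R : realFieldType) m :
  2 * \sum_(0 <= i < m) (i%:R : R) = m%:R * (m%:R - 1).
Proof.
elim: m => [|m IH]; first by rewrite big_geq // mulr0 mul0r.
rewrite big_nat_recr //= mulrDr IH -[m.+1]addn1 natrD; ring.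
Qed.

Unset Implicit Arguments.
Theorem mainTheorem1 (R : realFieldType) (s : nat) (hs : (2 <= s)%N) :
  forall bt : 'cV[R]_s, bt = b1_tilde R s \/ bt = b2_tilde R s ->
    let A := A_ssp2 R s in
    let c := A *m (const_mx 1 : 'cV[R]_s) in
    [/\ \sum_i bt i 0 = 1,
        \sum_i bt i 0 * c i 0 != 1 / 2 &
        is_ssp_coef A bt (s.-1)%:R].
Proof.
case: s hs => [|[|n]] hs //.
move=> bt hbt A c.
have cE : forall i : 'I_n.+2, c i 0 = (i:nat)%:R * (n.+1)%:R^-1 := fun i => c_E R i.
have hx : 0 <= n%:R :> R by [].
have e1 : (n.+1)%:R = n%:R + 1 :> R by rewrite -addn1 natrD.
have e2 : (n.+2)%:R = n%:R + 2 :> R by rewrite -addn2 natrD.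
have e3 : (n.+3)%:R = n%:R + 3 :> R by rewrite -addn3 natrD.
have e4 : ((n.+2) ^ 2)%:R = (n%:R + 2) ^+ 2 :> R by rewrite natrX e2.
have nz1 : n%:R + 1 != 0 :> R by rewrite lt0r_neq0 //; lra.
have nz2 : n%:R + 2 != 0 :> R by rewrite lt0r_neq0 //; lra.
have sid := sum_id R n.
have SE : \sum_(0 <= i < n) (i%:R : R) = n%:R * (n%:R - 1) / 2.
  by rewrite -sid; field.
have sid1 := sum_id R n.+1.
have SE1 : \sum_(0 <= i < n.+1) (i%:R : R) = (n%:R + 1) * n%:R / 2.
  by rewrite -[n%:R + 1]e1 (_ : n%:R = (n.+1)%:R - 1 :> R) -?sid1; [field | rewrite e1; ring].
case: hbt => ->.
- pose f := fun k => if (k < n.+1)%N then (n.+1)%:R^-1 else 0 : R.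
  have bE : b1_tilde R n.+2 = \col_k f k by [].
  rewrite bE; split.
  + under eq_bigr => i _ do rewrite mxE.
    rewrite -(big_mkord xpredT f) big_nat_recr //= {2}/f ltnn addr0.
    rewrite (eq_big_nat _ _ (F2 := fun _ => (n.+1)%:R^-1)); last first.
      by move=> k /andP[_ hk]; rewrite /f hk.
    rewrite sumr_const_nat subn0 (_ : forall y : R, y *+ n.+1 = (n.+1)%:R * y); last by move=> y; rewrite mulr_natl.
    by rewrite mulfV // e1.
  + under eq_bigr => i _ do rewrite mxE cE.
    rewrite -(big_mkord xpredT (fun i => f i * (i%:R * (n.+1)%:R^-1))).
    rewrite big_nat_recr //= {2}/f ltnn mul0r addr0.
    rewrite (eq_big_nat _ _ (F2 := fun i => ((n.+1)%:R^-1 * (n.+1)%:R^-1) * i%:R)); last first.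
      by move=> k /andP[_ hk]; rewrite /f hk; ring.
    rewrite -mulr_sumr SE1 e1.
    have -> : (n%:R + 1)^-1 * (n%:R + 1)^-1 * ((n%:R + 1) * n%:R / 2) =
              1 / 2 - (2 * (n%:R + 1))^-1 :> R by field.
    apply/eqP => E.
    have : 0 < (2 * (n%:R + 1))^-1 :> R by rewrite invr_gt0; lra.
    lra.
  + apply: ssp_gen => //.
      move=> j hj; rewrite /bbf /f.
      have ha : 0 <= (n.+1)%:R^-1 :> R by rewrite invr_ge0.
      have [h|h] := ltnP j n.+1.
        by rewrite ltnS h; case: ifP.
      by rewrite ltnS ltnNge h.
    by rewrite /f /= e1 mulfV.
- pose f := fun k => (if k == 0%N then (n.+3)%:R / ((n.+2) ^ 2)%:R
          else if k == n.+1 then (n.+1)%:R / ((n.+2) ^ 2)%:R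
          else ((n.+2)%:R)^-1) : R.
  have bE : b2_tilde R n.+2 = \col_k f k by [].
  have f0 : f 0%N = (n%:R + 3) / (n%:R + 2) ^+ 2 by rewrite /f /= e3 e4.
  have fl : f n.+1 = (n%:R + 1) / (n%:R + 2) ^+ 2 by rewrite /f /= eqxx e1 e4.
  have fm : forall i, (i < n)%N -> f i.+1 = (n%:R + 2)^-1.
    move=> i hi; rewrite /f /=; have -> : (i.+1 == n.+1) = false by lia.
    by rewrite e2.
  rewrite bE; clearbody f; split.
  + under eq_bigr => i _ do rewrite mxE.
    rewrite -(big_mkord xpredT f) big_nat_recl //= big_nat_recr //= f0 fl.
    rewrite (eq_big_nat _ _ (F2 := fun _ => (n%:R + 2)^-1)); last first.
      by move=> k /andP[_ hk]; rewrite fm.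
    rewrite sumr_const_nat subn0 (_ : forall y : R, y *+ n = n%:R * y); last by move=> y; rewrite mulr_natl.
    by field.
  + under eq_bigr => i _ do rewrite mxE cE.
    rewrite -(big_mkord xpredT (fun i => f i * (i%:R * (n.+1)%:R^-1))).
    rewrite big_nat_recl //= big_nat_recr //= f0 fl mul0r mulr0 add0r.
    rewrite (eq_big_nat _ _ (F2 := fun i => ((n%:R + 2)^-1 * (n%:R + 1)^-1) * i%:R
                                         + (n%:R + 2)^-1 * (n%:R + 1)^-1)); last first.
      move=> k /andP[_ hk]; rewrite fm // e1 -addn1 natrD; ring.
    rewrite big_split /= -mulr_sumr SE sumr_const_nat subn0.
    rewrite -(mulr_natl ((n%:R + 2)^-1 * (n%:R + 1)^-1) n).
    rewrite e1.
    have -> : (n%:R + 2)^-1 * (n%:R + 1)^-1 * (n%:R * (n%:R - 1) / 2) +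
       n%:R * ((n%:R + 2)^-1 * (n%:R + 1)^-1) +
       (n%:R + 1) / (n%:R + 2) ^+ 2 * ((n%:R + 1) * (n%:R + 1)^-1) =
       1 / 2 - ((n%:R + 2) ^+ 2)^-1 :> R.
      by field; rewrite nz1 nz2.
    apply/eqP => E.
    have : 0 < ((n%:R + 2) ^+ 2)^-1 :> R by rewrite invr_gt0 exprn_gt0 //; lra.
    lra.
  + apply: ssp_gen => //.
      have hy : 0 < ((n%:R + 2) ^+ 2)^-1 :> R by rewrite invr_gt0 exprn_gt0 //; lra.
      set y := ((n%:R + 2) ^+ 2)^-1 in hy.
      have hq : forall a : R, a / (n%:R + 2) ^+ 2 = a * y by [].
      have hi : (n%:R + 2)^-1 = (n%:R + 2) * y by rewrite /y; field.
      move=> j hj; rewrite /bbf.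
      have [h|h] := ltnP j n.+1; last first.
        have -> : j = n.+1 by lia.
        rewrite ltnn fl hq; apply: mulr_ge0; lra.
      rewrite ltnS h.
      case: j h {hj} => [|j] h.
        rewrite f0 hq.
        have [en|hn] := eqVneq n 0%N.
          have -> : 1%N = n.+1 by rewrite en.
          by rewrite fl hq; rewrite ler_pM2r //; lra.
        rewrite fm; last by lia.
        rewrite hi; rewrite ler_pM2r //; lra.
      rewrite [X in _ <= X]fm; last by lia.
      have [e|hn] := eqVneq j.+1 n.
        rewrite e fl hq hi ler_pM2r //; lra.
      rewrite fm; last by lia.
      lra.
    rewrite f0 /= e1.
    have -> : (n%:R + 1) * ((n%:R + 3) / (n%:R + 2) ^+ 2) = 1 - ((n%:R + 2) ^+ 2)^-1 :> R by field.
    have : 0 < ((n%:R + 2) ^+ 2)^-1 :> R by rewrite invr_gt0 exprn_gt0 //; lra.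
    lra.
Qed.
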